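(* Let $\mathcal{S}=(P,N)$ be a sample with $P\neq\emptyset$, and let $\varphi$ be an LTL formula in negation normal form such that for every $M\in P$ and every state $s$ of $M$, $\mathrm{Pr}^{M}(s\models\varphi)=0$. Consider PLTL formulas of the form $\mathbf{P}_{>r}[\psi]$ with $r\in[0,1]$ and $\psi$ an LTL formula in negation normal form. If $\mathbf{P}_{>r}[\psi]$ is consistent with $\mathcal{S}$ and has minimal size among all consistent formulas of this form, then $\varphi$ is not a subformula of $\psi$.
   Context: A DTMC is a tuple $M=(S,s_I,P,\mathrm{AP},\ell)$ with finite state set $S$, initial state $s_I$, transition probabilities $P:S\times S\to[0,1]$, atomic propositions $\mathrm{AP}$ and labelling $\ell:S\to2^{\mathrm{AP}}$; $\mathrm{Pr}^M_s$ is the standard probability measure on infinite paths from $s$, and $\mathrm{Pr}^M(s\models\varphi)$ is the probability of the set of paths from $s$ satisfying the LTL formula $\varphi$. LTL formulas in negation normal form (NNF) are built from literals $p,\neg p$ ($p\in\mathrm{AP}$) using $\land,\lor,\mathbf{X},\mathbf{F},\mathbf{G},\mathbf{U}$ (negation only applied to atomic propositions), with the standard path semantics ($\mathbf{F}\varphi=\mathrm{true}\,\mathbf{U}\,\varphi$, $\mathbf{G}\varphi=\neg\mathbf{F}\neg\varphi$). The size of a formula is the number of occurrences of operators in $\{\mathbf{F},\mathbf{X},\mathbf{G},\mathbf{U},\land,\lor\}$ plus the number of occurrences of literals; the size of $\mathbf{P}_{>r}[\psi]$ is the size of $\psi$. A state $s$ satisfies $\mathbf{P}_{>r}[\psi]$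 iff $\mathrm{Pr}^M(s\models\psi)>r$, and a DTMC satisfies it iff its initial state does. A sample $\mathcal{S}=(P,N)$ consists of finite sets $P$ (positive) and $N$ (negative) of DTMCs over the same $\mathrm{AP}$; a formula is consistent with $\mathcal{S}$ if all DTMCs in $P$ satisfy it and no DTMC in $N$ satisfies it. *)

(* Defs.v *)
From HB Require Import structures.
From mathcomp Require Import all_boot all_order all_algebra.
From mathcomp Require Import all_classical all_reals all_analysis.
From Stdlib Require List.

Set Implicit Arguments.
Unset Strict Implicit.
Unset Printing Implicit Defensive.

Import Order.TTheory GRing.Theory Num.Theory.
Local Open Scope classical_set_scope.
Local Open Scope ring_scope.

Record dtmc (AP : finType) (R : realType) := DTMC {
  state : finType;
  init : state;
  trans : state -> state -> R;
  trans_ge0 : forall s t, 0 <= trans s t;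
  trans_sum1 : forall s, \sum_(t : state) trans s t = 1;
  label : state -> {set AP}
}.
Arguments init {AP R} _.
Arguments trans {AP R} _ _ _.
Arguments label {AP R} _ _.

Definition rawpath AP R (M : dtmc AP R) := nat -> state M.
HB.instance Definition _ AP R (M : dtmc AP R) :=
  Choice.on (rawpath M).
HB.instance Definition _ AP R (M : dtmc AP R) :=
  isPointed.Build (rawpath M) (fun _ => init M).

Definition cyl AP R (M : dtmc AP R) (w : seq (state M)) : set (rawpath M) :=
  [set pi | forall i, (i < size w)%N -> pi i = nth (init M) w i].
Arguments cyl {AP R} M w.

Definition cylinders AP R (M : dtmc AP R) : set (set (rawpath M)) :=
  range (@cyl AP R M).
Arguments cylinders {AP R} M.

Definition path AP R (M : dtmc AP R) := g_sigma_algebraType (cylinders M).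
Arguments path {AP R} M.

Fixpoint wprob AP R (M : dtmc AP R) (x : state M) (w : seq (state M)) : R :=
  match w with
  | [::] => 1
  | y :: w' => trans M x y * wprob y w'
  end.
Arguments wprob {AP R} M x w.

(* mu is the standard probability measure Pr^M_s on infinite paths from s:
   it is the (unique) probability measure on the sigma-algebra generated by
   cylinders which gives each cylinder of t w_1 ... w_n the probability
   [t = s] * P(t,w_1) * ... * P(w_{n-1},w_n). *)
Definition is_path_measure AP R (M : dtmc AP R) (s : state M)
  (mu : probability (path M) R) : Prop :=
  forall (t : state M) (w : seq (state M)),
    mu (cyl M (t :: w)) = (((t == s)%:R * wprob M t w)%:E)%E.

Inductive ltl (AP : Type) :=
  | Lit of AP
  | NLit of AP
  | And of ltl AP & ltl AP
  | Or of ltl AP & ltl AP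
  | Next of ltl AP
  | Ev of ltl AP
  | Alw of ltl AP
  | Until of ltl AP & ltl AP.
Arguments Lit {AP}.
Arguments NLit {AP}.

Fixpoint sat AP R (M : dtmc AP R) (pi : rawpath M) (i : nat) (phi : ltl AP)
  : Prop :=
  match phi with
  | Lit p => p \in label M (pi i)
  | NLit p => p \notin label M (pi i)
  | And a b => sat pi i a /\ sat pi i b
  | Or a b => sat pi i a \/ sat pi i b
  | Next a => sat pi i.+1 a
  | Ev a => exists k, (i <= k)%N /\ sat pi k a
  | Alw a => forall k, (i <= k)%N -> sat pi k a
  | Until a b => exists k, [/\ (i <= k)%N, sat pi k b &
                           forall j, (i <= j < k)%N -> sat pi j a]
  end.

Definition sat_set AP R (M : dtmc AP R) (phi : ltl AP) : set (path M) :=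
  [set pi | sat (pi : rawpath M) 0 phi].
Arguments sat_set {AP R} M phi.

Fixpoint ltl_size AP (phi : ltl AP) : nat :=
  match phi with
  | Lit _ | NLit _ => 1
  | And a b | Or a b | Until a b => (ltl_size a + ltl_size b).+1
  | Next a | Ev a | Alw a => (ltl_size a).+1
  end.

Fixpoint subformula AP (phi psi : ltl AP) : Prop :=
  phi = psi \/
  match psi with
  | Lit _ | NLit _ => False
  | And a b | Or a b | Until a b => subformula phi a \/ subformula phi b
  | Next a | Ev a | Alw a => subformula phi a
  end.

Definition path_measures AP R :=
  forall M : dtmc AP R, state M -> probability (path M) R.

Definition PrSat AP R (Pr : path_measures AP R) (M : dtmc AP R)
  (s : state M) (phi : ltl AP) : \bar R :=
  Pr M s (sat_set M phi).
Arguments PrSat {AP R} Pr M s phi.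

Definition sat_PLTL AP R (Pr : path_measures AP R) (M : dtmc AP R)
  (r : R) (psi : ltl AP) : Prop :=
  (r%:E < PrSat Pr M (init M) psi)%E.

Definition consistent AP R (Pr : path_measures AP R)
  (Pos Neg : seq (dtmc AP R)) (r : R) (psi : ltl AP) : Prop :=
  (forall M, List.In M Pos -> sat_PLTL Pr M r psi) /\
  (forall M, List.In M Neg -> ~ sat_PLTL Pr M r psi).

(* Main.v *)
Require Import Defs.
From HB Require Import structures.
From mathcomp Require Import all_boot all_order all_algebra.
From mathcomp Require Import all_classical all_reals all_analysis.
Import Order.TTheory GRing.Theory Num.Theory.
Local Open Scope classical_set_scope.
Local Open Scope ring_scope.

Notation PS M := (Defs.path M).

Section Meas.
Context (AP : finType) (R : realType) (M : dtmc AP R).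

Lemma cyl_meas (w : seq (state M)) : measurable (cyl M w : set (PS M)).
Proof. by apply: sub_gen_smallest; exists w. Qed.

Lemma findep_meas (X : set (PS M)) n (Q : seq (state M) -> Prop) :
  (forall pi : PS M, X pi <-> Q (mkseq pi n)) -> measurable X.
Proof.
move=> HX.
pose F (k : nat) : set (PS M) :=
  if (unpickle k : option (seq (state M))) is Some w then
    (if `[< size w = n /\ Q w >] then cyl M w else set0) else set0.
have -> : X = \bigcup_k F k.
  apply/seteqP; split => pi.
    move=> /HX Hq; exists (pickle (mkseq pi n)) => //.
    rewrite /F pickleK asboolT; last by rewrite size_mkseq.
    by move=> i; rewrite size_mkseq => Hi; rewrite nth_mkseq.
  case=> k _; rewrite /F; case: (unpickle k) => [w|//].
  case: asboolP => [[Hs Hw] Hc|//]; apply/HX.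
  suff -> : mkseq pi n = w by [].
  apply: (@eq_from_nth _ (init M)); first by rewrite size_mkseq.
  by move=> i; rewrite size_mkseq => Hi; rewrite nth_mkseq // Hc // Hs.
apply: bigcupT_measurable => k; rewrite /F; case: (unpickle k) => [w|//].
by case: asboolP => _; [exact: cyl_meas|].
Qed.

Lemma sat_meas (f : ltl AP) : forall i, measurable [set pi : PS M | sat pi i f].
Proof.
elim: f => [p|p|a IHa b IHb|a IHa b IHb|a IHa|a IHa|a IHa|a IHa b IHb] i /=.
- apply: (@findep_meas _ i.+1 (fun u => p \in label M (nth (init M) u i))).
  by move=> pi; rewrite nth_mkseq.
- apply: (@findep_meas _ i.+1 (fun u => p \notin label M (nth (init M) u i))).
  by move=> pi; rewrite nth_mkseq.
- exact: (measurableI _ _ (IHa i) (IHb i)).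
- exact: (measurableU _ _ (IHa i) (IHb i)).
- exact: IHa.
- rewrite (_ : [set _ | _] = \bigcup_(k in [set k | (i <= k)%N]) [set pi : PS M | sat pi k a]).
    by apply: bigcup_measurable => k _; exact: IHa.
  by apply/seteqP; split => pi /=; [case=> k [? ?]; exists k|case=> k ? ?; exists k].
- rewrite (_ : [set _ | _] = \bigcap_(k in [set k | (i <= k)%N]) [set pi : PS M | sat pi k a]).
    by apply: bigcap_measurable => [|k _]; [exists i => /=|exact: IHa].
  by apply/seteqP; split => pi /=.
- rewrite (_ : [set _ | _] = \bigcup_(k in [set k | (i <= k)%N])
     ([set pi : PS M | sat pi k b] `&` \bigcap_j (if (i <= j < k)%N then [set pi : PS M | sat pi j a] else setT))).
    apply: bigcup_measurable => k _; apply: measurableI; first exact: IHb.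
    by apply: bigcapT_measurable => j; case: ifP => _; [exact: IHa|exact: measurableT].
  apply/seteqP; split => pi /=.
    case=> k [H1 H2 H3]; exists k => //; split => // j _; case: ifP => // /H3; exact.
  case=> k H1 [H2 H3]; exists k; split => // j Hj; by have := H3 j I; rewrite Hj.
Qed.
End Meas.
Definition shift1 {AP R} {M : dtmc AP R} (pi : PS M) : PS M := fun n => pi n.+1.

Lemma sat_shift AP R (M : dtmc AP R) (f : ltl AP) : forall (pi : PS M) i,
  sat pi i.+1 f <-> sat (shift1 pi) i f.
Proof.
elim: f => [p|p|a IHa b IHb|a IHa b IHb|a IHa|a IHa|a IHa|a IHa b IHb] pi i /=.
- by [].
- by [].
- by rewrite IHa IHb.
- by rewrite IHa IHb.
- exact: IHa.
- split.
    case=> -[|k] [Hk H] //; exists k; split => //; exact/IHa.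
  case=> k [Hk H]; exists k.+1; split => //; exact/IHa.
- split.
    move=> H k Hk; apply/IHa; exact: H.
  move=> H [//|k] Hk; apply/IHa; exact: H.
- split.
    case=> -[|k] [Hk Hb Ha] //; exists k; split => //; first exact/IHb.
    move=> j /andP[j1 j2]; apply/IHa; apply: Ha; by rewrite ltnS j1.
  case=> k [Hk Hb Ha]; exists k.+1; split => //; first exact/IHb.
  move=> [|j] /andP[j1 j2] //; apply/IHa; apply: Ha; by rewrite -ltnS j1 -ltnS j2.
Qed.

Section Markov.
Context (AP : finType) (R : realType) (M : dtmc AP R).
Variable Pr : state M -> probability (PS M) R.

Lemma shift1_meas : measurable_fun setT (@shift1 AP R M).
Proof.
apply: (@measurability _ _ _ _ setT shift1 (cylinders M)) => //.
move=> X [B [w _ <-] <-]; rewrite setTI.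
apply: (@findep_meas _ _ M _ (size w).+1
   (fun u => forall j, (j < size w)%N -> nth (init M) u j.+1 = nth (init M) w j)) => pi.
split => H j Hj.
  by rewrite nth_mkseq ?ltnS //; exact: H.
by have := H j Hj; rewrite nth_mkseq ?ltnS.
Qed.

Lemma shift1_pre_meas (A : set (PS M)) : measurable A -> measurable (shift1 @^-1` A).
Proof. by move=> mA; rewrite -[X in measurable X]setTI; exact: shift1_meas. Qed.

Section Nu.
Variable s : state M.
Definition nu (A : set (PS M)) : \bar R := Pr s (shift1 @^-1` A).

Let nu0 : nu set0 = 0%E.
Proof. by rewrite /nu preimage_set0 measure0. Qed.

Let nu_ge0 A : (0 <= nu A)%E.
Proof. exact: measure_ge0. Qed.

Let nu_sigma_additive : semi_sigma_additive nu.
Proof.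
move=> F mF tF mUF; rewrite /nu preimage_bigcup.
apply: measure_semi_sigma_additive.
- by move=> n; exact: shift1_pre_meas.
- apply/trivIsetP => /= i j _ _ ij; rewrite -preimage_setI.
  by move/trivIsetP : tF => /(_ _ _ _ _ ij) ->//; rewrite preimage_set0.
- by rewrite -preimage_bigcup; exact: shift1_pre_meas.
Qed.

HB.instance Definition _ := isMeasure.Build _ _ _ nu
  nu0 nu_ge0 nu_sigma_additive.

Definition rho (A : set (PS M)) : \bar R :=
  \sum_(t : state M) ((trans M s t)%:E * Pr t A)%E.

Let rho0 : rho set0 = 0%E.
Proof. by rewrite /rho big1 // => t _; rewrite measure0 mule0. Qed.

Let rho_ge0 A : (0 <= rho A)%E.
Proof. by apply: sume_ge0 => t _; apply: mule_ge0; rewrite ?lee_fin ?trans_ge0. Qed.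

Let rho_sigma_additive : semi_sigma_additive rho.
Proof.
move=> F mF tF mUF; rewrite [X in _ --> X](_ : _ =
    lim ((fun n => \sum_(0 <= i < n) rho (F i)) @ \oo)).
  by apply: is_cvg_ereal_nneg_natsum => k _; exact: rho_ge0.
rewrite nneseries_sum; last first.
  by move=> t j _; apply: mule_ge0; rewrite ?lee_fin ?trans_ge0.
apply: eq_bigr => t _.
by rewrite nneseriesZl // measure_semi_bigcup.
Qed.

HB.instance Definition _ := isMeasure.Build _ _ _ rho
  rho0 rho_ge0 rho_sigma_additive.
End Nu.
End Markov.
Arguments nu {AP R M} Pr s A.
Arguments rho {AP R M} Pr s A.

Section Unique.
Context (AP : finType) (R : realType) (M : dtmc AP R).
Variable Pr : state M -> probability (PS M) R.
Hypothesis HPr : forall s, is_path_measure s (Pr s).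

Let G : set (set (PS M)) := [set X | X = set0 \/ cylinders M X].

Lemma cyl_nil : cyl M [::] = setT.
Proof. by apply/seteqP; split => pi //= _ i. Qed.

Let mG : @measurable _ (PS M) = <<s G >>.
Proof.
apply/seteqP; split.
  apply: smallest_sub; first exact: smallest_sigma_algebra.
  by move=> X HX; apply: sub_gen_smallest; right.
apply: smallest_sub; first exact: smallest_sigma_algebra.
by move=> X [->|HX]; [exact: measurable0|exact: sub_gen_smallest].
Qed.

Let setIG : setI_closed G.
Proof.
move=> A B [->|[w1 _ <-]]; first by rewrite set0I; left.
move=> [->|[w2 _ <-]]; first by rewrite setI0; left.
have [->|/set0P[pi [h1 h2]]] := eqVneq (cyl M w1 `&` cyl M w2) set0; first by left.
right.
have key : forall u v : seq (state M), (size u <= size v)%N ->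
   cyl M u pi -> cyl M v pi -> cyl M u `&` cyl M v = cyl M v.
  move=> u v uv hu hv; apply/seteqP; split => x; first by case.
  move=> hx; split => // i Hi.
  rewrite -hu // hx //; last exact: leq_trans uv.
  by rewrite hv //; exact: leq_trans uv.
case: (leqP (size w1) (size w2)) => h.
  by exists w2 => //; rewrite key.
by exists w1 => //; rewrite setIC key // ltnW.
Qed.

Lemma conc s (X : set (PS M)) : measurable X -> Pr s X = Pr s (X `&` cyl M [:: s]).
Proof.
move=> mX.
have mC : measurable (cyl M [:: s] : set (PS M)) by exact: cyl_meas.
have C1 : Pr s (cyl M [:: s]) = 1%E by rewrite HPr eqxx mul1r.
have nC : Pr s (~` cyl M [:: s]) = 0%E.
  by rewrite probability_setC // C1 subee.
rewrite -{1}(setIT X) -(setUCr (cyl M [:: s])) setIUr measureU0 //.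
- exact: measurableI.
- by apply: measurableI => //; exact: measurableC.
- apply: (subset_measure0 _ _ _ nC).
  + by apply: measurableI => //; exact: measurableC.
  + exact: measurableC.
  + exact: subIsetr.
Qed.

Lemma nu_rho s A : measurable A -> nu Pr s A = rho Pr s A.
Proof.
move=> mA.
apply: (measure_unique G (fun _ => setT) mG setIG) => //.
- by move=> _; right; exists [::] => //; rewrite cyl_nil.
- by rewrite bigcup_const.
- move=> X [->|[w _ <-]]; first by rewrite !measure0.
  change (nu Pr s (cyl M w) = rho Pr s (cyl M w)).
  case: w => [|t w].
    rewrite cyl_nil /nu /rho preimage_setT probability_setT.
    under eq_bigr do rewrite probability_setT mule1.
    by rewrite sumEFin trans_sum1.
  rewrite /rho (bigD1 t) //= big1 ?adde0; last first.
    by move=> u /negbTE ut; rewrite HPr eq_sym ut mul0r mule0.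
  rewrite HPr eqxx mul1r /nu conc; last by apply: shift1_pre_meas; exact: cyl_meas.
  rewrite (_ : _ `&` _ = cyl M [:: s, t & w]); last first.
    apply/seteqP; split => pi.
      case=> H1 H2 [|i] Hi; first exact: H2.
      exact: H1.
    move=> H; split; last by case=> // Hi; exact: (H 0).
    by move=> i Hi; apply: (H i.+1).
  by rewrite HPr eqxx mul1r.
- by move=> _; change (nu Pr s setT < +oo)%E; rewrite /nu preimage_setT probability_setT ltry.
Qed.

Lemma null_shift (A : set (PS M)) : measurable A -> (forall t, Pr t A = 0%E) ->
  forall s, Pr s (shift1 @^-1` A) = 0%E.
Proof.
move=> mA H0 s; have := nu_rho s A mA; rewrite /nu => ->.
by rewrite /rho big1 // => t _; rewrite H0 mule0.
Qed.
End Unique.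

Lemma reduce (AP : finType) (R : realType) (phi psi : ltl AP) : subformula phi psi ->
  (forall (M : dtmc AP R) (pi : PS M) i, sat pi i psi -> exists j, sat pi j phi) \/
  exists psi', (ltl_size psi' < ltl_size psi)%N /\
    (forall (M : dtmc AP R) (pi : PS M) i, sat pi i psi' -> sat pi i psi) /\
    (forall (M : dtmc AP R) (pi : PS M) i, sat pi i psi ->
        sat pi i psi' \/ exists j, sat pi j phi).
Proof.
elim: psi => [p|p|a IHa b IHb|a IHa b IHb|a IHa|a IHa|a IHa|a IHa b IHb] /= [->|H];
  try by left => M pi i h; exists i.
- case: H => H.
    case: (IHa H) => [Ha|[a' [sz [imp rev]]]].
      by left => M pi i [h _]; exact: Ha h.
    right; exists (And a' b); split; first by rewrite /= ltnS ltn_add2r.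
    split; first by move=> M pi i [h1 h2]; split => //; exact: imp.
    move=> M pi i [h1 h2]; case: (rev _ _ _ h1) => [h|h]; [left; split|right] => //.
  case: (IHb H) => [Hb|[b' [sz [imp rev]]]].
    by left => M pi i [_ h]; exact: Hb h.
  right; exists (And a b'); split; first by rewrite /= ltnS ltn_add2l.
  split; first by move=> M pi i [h1 h2]; split => //; exact: imp.
  move=> M pi i [h1 h2]; case: (rev _ _ _ h2) => [h|h]; [left; split|right] => //.
- case: H => H.
    case: (IHa H) => [Ha|[a' [sz [imp rev]]]].
      right; exists b; split; first by rewrite /= ltnS leq_addl.
      split; first by move=> M pi i h; right.
      by move=> M pi i [h|h]; [right; exact: Ha h|left].
    right; exists (Or a' b); split; first by rewrite /= ltnS ltn_add2r.
    split; first by move=> M pi i [h|h]; [left; exact: imp|right].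
    move=> M pi i [h|h]; last by left; right.
    by case: (rev _ _ _ h) => [h'|h']; [left; left|right].
  case: (IHb H) => [Hb|[b' [sz [imp rev]]]].
    right; exists a; split; first by rewrite /= ltnS leq_addr.
    split; first by move=> M pi i h; left.
    by move=> M pi i [h|h]; [left|right; exact: Hb h].
  right; exists (Or a b'); split; first by rewrite /= ltnS ltn_add2l.
  split; first by move=> M pi i [h|h]; [left|right; exact: imp].
  move=> M pi i [h|h]; first by left; left.
  by case: (rev _ _ _ h) => [h'|h']; [left; right|right].
- case: (IHa H) => [Ha|[a' [sz [imp rev]]]].
    by left => M pi i h; exact: Ha h.
  right; exists (Next a'); split => //=.
  by split => M pi i h; [exact: imp|exact: rev].
- case: (IHa H) => [Ha|[a' [sz [imp rev]]]].
    by left => M pi i [k [_ h]]; exact: Ha h.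
  right; exists (Ev a'); split => //=.
  split; first by move=> M pi i [k [hk h]]; exists k; split => //; exact: imp.
  move=> M pi i [k [hk h]]; case: (rev _ _ _ h) => [h'|h']; last by right.
  by left; exists k.
- case: (IHa H) => [Ha|[a' [sz [imp rev]]]].
    by left => M pi i h; exact: (Ha _ _ _ (h i (leqnn i))).
  right; exists (Alw a'); split => //=.
  split; first by move=> M pi i h k hk; exact/imp/h.
  move=> M pi i h.
  have [[k [hk nk]]|Hn] := pselect (exists k, (i <= k)%N /\ ~ sat pi k a').
    by case: (rev _ _ _ (h k hk)) => [//|h']; right.
  left => k hk; apply: contrapT => nk; by apply: Hn; exists k.
- case: H => H.
    case: (IHa H) => [Ha|[a' [sz [imp rev]]]].
      right; exists b; split; first by rewrite /= ltnS leq_addl.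
      split; first by move=> M pi i h; exists i; split => // j /andP[j1 j2]; 
        move: (leq_trans j2 j1); rewrite ltnn.
      move=> M pi i [k [hk hb ha]]; case: (leqP k i) => ki.
        by left; have <- : k = i by apply/eqP; rewrite eqn_leq hk ki.
      by right; apply: (Ha _ _ _ (ha i _)); rewrite leqnn ki.
    right; exists (Until a' b); split; first by rewrite /= ltnS ltn_add2r.
    split.
      move=> M pi i [k [hk hb ha]]; exists k; split => // j hj; exact/imp/ha.
    move=> M pi i [k [hk hb ha]].
    have [[j [hj nj]]|Hn] := pselect (exists j, (i <= j < k)%N /\ ~ sat pi j a').
      by case: (rev _ _ _ (ha j hj)) => [//|h']; right.
    left; exists k; split => // j hj; apply: contrapT => nj; by apply: Hn; exists j.
  case: (IHb H) => [Hb|[b' [sz [imp rev]]]].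
    by left => M pi i [k [_ h _]]; exact: Hb h.
  right; exists (Until a b'); split; first by rewrite /= ltnS ltn_add2l.
  split.
    by move=> M pi i [k [hk hb ha]]; exists k; split => //; exact: imp.
  move=> M pi i [k [hk hb ha]]; case: (rev _ _ _ hb) => [h'|h']; last by right.
  by left; exists k.
Qed.

Section Final.
Context (AP : finType) (R : realType) (Pr : path_measures AP R).
Hypothesis HPr : forall (M : dtmc AP R) (s : state M), is_path_measure s (Pr M s).

Lemma null_at (M : dtmc AP R) (phi : ltl AP) :
  (forall s, PrSat Pr M s phi = 0%E) ->
  forall i s, Pr M s [set pi : PS M | sat pi i phi] = 0%E.
Proof.
move=> H; elim=> [|i IH] s; first exact: H.
rewrite (_ : [set pi : PS M | sat pi i.+1 phi] = shift1 @^-1` [set pi : PS M | sat pi i phi]).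
  apply: (@null_shift AP R M (Pr M) (HPr M)); [exact: sat_meas|exact: IH].
by apply/seteqP; split => pi /=; rewrite sat_shift.
Qed.

Lemma null_all (M : dtmc AP R) (phi : ltl AP) :
  (forall s, PrSat Pr M s phi = 0%E) ->
  forall s, Pr M s (\bigcup_i [set pi : PS M | sat pi i phi]) = 0%E.
Proof.
move=> H s.
have [B [mB B0 sB]] : (Pr M s).-negligible (\bigcup_i [set pi : PS M | sat pi i phi]).
  apply: negligible_bigcup => k; exists [set pi : PS M | sat pi k phi]; split => //.
    exact: sat_meas.
  exact: null_at.
apply: (subset_measure0 _ mB sB B0).
by apply: bigcupT_measurable => k; exact: sat_meas.
Qed.
End Final.

Theorem lemma3 (AP : finType) (R : realType) (Pr : path_measures AP R)
  (HPr : forall (M : dtmc AP R) (s : state M), is_path_measure s (Pr M s))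
  (Pos Neg : seq (dtmc AP R)) (phi psi : ltl AP) (r : R) :
  Pos <> [::] ->
  (forall M, List.In M Pos -> forall s : state M, PrSat Pr M s phi = 0%E) ->
  0 <= r <= 1 ->
  consistent Pr Pos Neg r psi ->
  (forall (r' : R) (psi' : ltl AP), 0 <= r' <= 1 ->
     consistent Pr Pos Neg r' psi' -> (ltl_size psi <= ltl_size psi')%N) ->
  ~ subformula phi psi.
Proof.
move=> Hpos Hnull Hr [Hcp Hcn] Hmin Hsub.
have [M0 HM0] : exists M, List.In M Pos.
  by case: Pos Hpos Hcp Hcn Hmin Hnull => // M l _ *; exists M; left.
have r0 : 0 <= r by case/andP: Hr.
set N := fun M : dtmc AP R => \bigcup_i [set pi : PS M | sat pi i phi].
have mN : forall M, measurable (N M).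
  by move=> M; apply: bigcupT_measurable => k; exact: sat_meas.
have N0 : forall M, List.In M Pos -> Pr M (init M) (N M) = 0%E.
  by move=> M HM; apply: null_all => //; exact: Hnull.
case: (@reduce AP R _ _ Hsub) => [Ha|[psi' [sz [imp rev]]]].
  have := Hcp M0 HM0; rewrite /sat_PLTL /PrSat => H.
  have : (Pr M0 (init M0) (sat_set M0 psi) <= Pr M0 (init M0) (N M0))%E.
    apply: le_measure; rewrite ?inE; [exact: sat_meas|exact: mN|].
    move=> pi h; have [j hj] := Ha _ _ _ h; by exists j.
  rewrite N0 // => H'.
  have := lt_le_trans H H'; rewrite lte_fin ltNge r0; by [].
suff Hc : consistent Pr Pos Neg r psi' by have := Hmin r psi' Hr Hc; rewrite leqNgt sz.
split => M HM.
  have := Hcp M HM; rewrite /sat_PLTL /PrSat => H.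
  apply: (lt_le_trans H).
  have : (Pr M (init M) (sat_set M psi) <= Pr M (init M) (sat_set M psi' `|` N M))%E.
    apply: le_measure; rewrite ?inE; [exact: sat_meas| |].
      apply: measurableU; [exact: sat_meas|exact: mN].
    move=> pi h; case: (rev _ _ _ h) => [h'|[j hj]]; [left|right; exists j] => //.
  move=> Hle; apply: (le_trans Hle).
  by rewrite (measureU0 (@sat_meas _ _ M psi' 0) (mN M) (N0 M HM)).
move=> H; apply: (Hcn M HM); move: H; rewrite /sat_PLTL /PrSat => H.
apply: (lt_le_trans H); apply: le_measure; rewrite ?inE; [exact: sat_meas|exact: sat_meas|].
move=> pi h; exact: imp.
Qed.
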